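(* Let $G$ be a graph on $n$ vertices with at least one edge. Then \[ \lambda(G)\le \frac{-|E(G)|}{\binom{\chi(G)}{2}\,\theta(G)}. \]
   Context: All graphs are finite and simple; $\lambda(G)$ denotes the smallest eigenvalue of the adjacency matrix of $G$. $\chi(G)$ is the chromatic number and $\alpha(G)$ the independence number of $G$. For a graph $G$ on $n$ vertices, $\theta(G)=\min\{n/2,\ \alpha(G)\}$. *)

(* Defs.v *)
From HB Require Import structures.
From mathcomp Require Import all_boot all_order all_algebra.
From mathcomp Require Import reals.
Set Implicit Arguments. Unset Strict Implicit. Unset Printing Implicit Defensive.
Import Order.TTheory GRing.Theory Num.Theory.
Local Open Scope ring_scope.

Definition simple_graph (n : nat) (e : rel 'I_n) : Prop :=
  irreflexive e /\ symmetric e.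

Definition adj_mx (R : realType) (n : nat) (e : rel 'I_n) : 'M[R]_n :=
  \matrix_(i, j) (e i j)%:R.

Definition is_smallest_eigenvalue (R : realType) (n : nat) (A : 'M[R]_n) (mu : R) : Prop :=
  eigenvalue A mu /\ (forall nu, eigenvalue A nu -> mu <= nu).

Definition num_edges (n : nat) (e : rel 'I_n) : nat :=
  #|[set p : 'I_n * 'I_n | (p.1 < p.2)%N && e p.1 p.2]|.

Definition colorable (n : nat) (e : rel 'I_n) (k : nat) : bool :=
  [exists f : {ffun 'I_n -> 'I_k}, [forall x, forall y, e x y ==> (f x != f y)]].

(* chromatic number: least k (searched in 0..n, which suffices for loopless
   graphs since the identity colouring uses n colours) admitting a proper
   k-colouring. *)
Definition chromatic_number (n : nat) (e : rel 'I_n) : nat :=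
  find (colorable e) (iota 0 n.+1).

Definition independent (n : nat) (e : rel 'I_n) (A : {set 'I_n}) : bool :=
  [forall x in A, forall y in A, ~~ e x y].

Definition independence_number (n : nat) (e : rel 'I_n) : nat :=
  \max_(A : {set 'I_n} | independent e A) #|A|.

Definition theta (R : realType) (n : nat) (e : rel 'I_n) : R :=
  Num.min (n%:R / 2) (independence_number e)%:R.

(* Main.v *)
Require Import Defs.
From HB Require Import structures.
From mathcomp Require Import all_boot all_order all_algebra.
From mathcomp Require Import reals.
From mathcomp Require Import complex spectral sesquilinear.
From mathcomp Require Import ring lra.
Import Order.TTheory GRing.Theory Num.Theory.
Local Open Scope ring_scope.

Section Ray.
Variable R : realType.

Lemma conj_phi (r : R) : ((r%:C)%C)^* = (r%:C)%C.
Proof. first [exact: conjc_real | by apply: conj_Creal; apply/complex_realP; exists r]. Qed.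

Lemma rayleigh n (A : 'M[R]_n) mu (x : 'rV[R]_n) :
  A^T = A -> (forall nu, eigenvalue A nu -> mu <= nu) ->
  mu * (x *m x^T) 0 0 <= (x *m A *m x^T) 0 0.
Proof.
move=> symA minmu.
pose phi := real_complex R.
pose Ac := map_mx phi A.
have hAc : Ac \is hermsymmx.
  apply/is_hermitianmxP; rewrite expr0 scale1r.
  apply/matrixP => i j; rewrite !mxE conj_phi.
  by rewrite -{1}symA mxE.
have AcE := (orthomx_spectralP (hermitian_normalmx hAc)).
set P := spectralmx Ac in AcE; set d := spectral_diag Ac in AcE.
have PU : P \is unitarymx := spectral_unitarymx Ac.
have Punit : P \in unitmx := spectral_unit Ac.
have dreal := hermitian_spectral_diag_real hAc.
have eig i : (mu%:C)%C <= d 0 i.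
  have /complex_realP [r dr] : d 0 i \is Num.real by exact: (mxOverP dreal).
  rewrite dr lecR; apply: minmu.
  rewrite eigenvalue_root_char -(fmorph_root phi) map_char_poly -eigenvalue_root_char.
  rewrite -/Ac; suff: eigenvalue Ac (d 0 i) by rewrite dr.
  apply/eigenvalueP; exists (row i P).
    rewrite -row_mul.
    have -> : P *m Ac = diag_mx d *m P.
      by rewrite {1}AcE !mulmxA mulmxV // mul1mx.
    by apply/rowP => j; rewrite mul_diag_mx !mxE.
  apply/eqP => /(congr1 (mulmx^~ (P ^t* )%sesqui)).
  rewrite -row_mul mul0mx; move/unitarymxP: PU => ->.
  move/rowP/(_ i); rewrite !mxE eqxx /=.
  by move/eqP; rewrite oner_eq0.
pose xc := map_mx phi x.
pose y := xc *m (P ^t* )%sesqui.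
have PtP : (P ^t* )%sesqui *m P = 1%:M by rewrite -invmx_unitary // mulVmx.
have xcT : map_mx phi x^T = (xc ^t* )%sesqui.
  by apply/matrixP => i j; rewrite !mxE conj_phi.
have yT : (y ^t* )%sesqui = P *m (xc ^t* )%sesqui.
  by rewrite /y trmx_mul map_mxM trmxCK.
have key1 : ((x *m A *m x^T) 0 0)%:C%C = (y *m diag_mx d *m (y ^t* )%sesqui) 0 0.
  have -> : ((x *m A *m x^T) 0 0)%:C%C = (map_mx phi (x *m A *m x^T)) 0 0 by rewrite [RHS]mxE.
  rewrite !map_mxM xcT -/Ac -/xc {1}AcE invmx_unitary // yT /y.
  by rewrite !mulmxA.
have key2 : ((x *m x^T) 0 0)%:C%C = (y *m (y ^t* )%sesqui) 0 0.
  have -> : ((x *m x^T) 0 0)%:C%C = (map_mx phi (x *m x^T)) 0 0 by rewrite [RHS]mxE.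
  rewrite !map_mxM xcT -/xc yT /y.
  by rewrite !mulmxA -(mulmxA xc) PtP mulmx1.
have hm : ((mu * ((x *m x^T) 0 0))%:C)%C = (mu%:C)%C * (((x *m x^T) 0 0)%:C)%C.
  exact: rmorphM.
rewrite -lecR hm key1 key2 mul_mx_diag !mxE mulr_sumr.
apply: ler_sum => j _; rewrite !mxE.
rewrite mulrC [X in _ <= X]mulrAC; apply: ler_wpM2l; last exact: eig.
exact: mul_conjC_ge0.
Qed.
End Ray.

Section G.
Variable R : realType.
Variable n : nat.
Variable e : rel 'I_n.
Hypothesis irr : irreflexive e.
Hypothesis sym : symmetric e.
Local Notation A := (adj_mx R e).

Lemma quad_form (M : 'M[R]_n) (x : 'rV[R]_n) :
  (x *m M *m x^T) 0 0 = \sum_i \sum_j x 0 i * M i j * x 0 j.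
Proof.
rewrite mxE; under eq_bigr => j _ do rewrite !mxE big_distrl /=.
by rewrite exchange_big.
Qed.

Lemma norm_form (x : 'rV[R]_n) : (x *m x^T) 0 0 = \sum_i x 0 i ^+ 2.
Proof. by rewrite mxE; apply: eq_bigr => i _; rewrite !mxE expr2. Qed.

Lemma symA : A^T = A.
Proof. by apply/matrixP => i j; rewrite !mxE sym. Qed.

Variable k : nat.
Variable f : 'I_n -> 'I_k.
Hypothesis proper : forall x y, e x y -> f x != f y.

Definition del (c : 'I_k) (i : 'I_n) : R := (f i == c)%:R.
Definition ac c := \sum_i del c i.
Definition W c d := \sum_i \sum_j del c i * del d j * (e i j)%:R.

Lemma delcc c i j : del c i * del c j * (e i j)%:R = 0.
Proof.
rewrite /del; case E: (e i j); last by rewrite mulr0.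
have P := proper i j E.
case: (f i =P c) => [fic|_]; last by rewrite mul0r mul0r.
case: (f j =P c) => [fjc|_]; last by rewrite mulr0 mul0r.
by move: P; rewrite fic fjc eqxx.
Qed.

Lemma pair_ineq mu : (forall nu, eigenvalue A nu -> mu <= nu) -> forall c d, c != d ->
  mu * (ac c + ac d) <= - (W c d + W d c).
Proof.
move=> minmu c d cd.
have := @rayleigh R n A mu (\row_i (del c i - del d i)) symA minmu.
rewrite quad_form norm_form.
have -> : \sum_i (\row_i0 (del c i0 - del d i0)) 0 i ^+ 2 = ac c + ac d.
  rewrite /ac -big_split; apply: eq_bigr => i _; rewrite mxE /del.
  case: (f i =P c) => [fc|_]; case: (f i =P d) => [fd|_] /=.
  - by move: cd; rewrite -fc -fd eqxx.
  all: rewrite ?subr0 ?sub0r ?sqrrN ?expr1n ?expr0n ?addr0 ?add0r //.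
have -> : \sum_i \sum_j (\row_i0 (del c i0 - del d i0)) 0 i * A i j *
      (\row_i0 (del c i0 - del d i0)) 0 j = - (W c d + W d c).
  rewrite /W -big_split -sumrN; apply: eq_bigr => i _.
  rewrite -big_split -sumrN; apply: eq_bigr => j _; rewrite /adj_mx !mxE.
  have h1 := delcc c i j; have h2 := delcc d i j.
  move: h1 h2; set a := del c i; set b := del d i; set a' := del c j.
  set b' := del d j; set z := (e i j)%:R => h1 h2.
  apply/eqP; rewrite -subr_eq0; apply/eqP.
  transitivity (a * a' * z + b * b' * z); first by simpl; ring.
  by rewrite h1 h2 addr0.
by [].
Qed.

Lemma ac_card c : ac c = #|[set i | f i == c]|%:R.
Proof.
rewrite -sum1_card natr_sum big_mkcond /=; apply: eq_bigr => i _.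
by rewrite inE /del; case: (f i == c).
Qed.

Lemma ac_le_alpha c : ac c <= (independence_number e)%:R.
Proof.
rewrite ac_card ler_nat /independence_number.
apply: (leq_bigmax_cond (F := fun B : {set 'I_n} => #|B|)).
apply/forall_inP => x; rewrite inE => /eqP fx; apply/forall_inP => y.
rewrite inE => /eqP fy; apply/negP => exy.
by have := proper x y exy; rewrite fx fy eqxx.
Qed.

Lemma ac_sum_le c d : c != d -> ac c + ac d <= n%:R.
Proof.
move=> cd; rewrite /ac -big_split /=.
have -> : (n%:R : R) = \sum_(i : 'I_n) 1 by rewrite sumr_const card_ord.
apply: ler_sum => i _; rewrite /del.
case: (f i =P c) => [fc|_]; case: (f i =P d) => [fd|_] /=.
- by move: cd; rewrite -fc -fd eqxx.
all: by rewrite ?addr0 ?add0r ?ler01 ?lexx.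
Qed.

Lemma sum_delta i : \sum_c del c i = 1.
Proof.
rewrite (bigD1 (f i)) //= /del eqxx big1 ?addr0 // => c /negbTE.
by rewrite eq_sym => ->.
Qed.

Lemma sumW : \sum_c \sum_d W c d = \sum_i \sum_j (e i j)%:R.
Proof.
rewrite /W.
transitivity (\sum_c \sum_i \sum_d \sum_j del c i * del d j * (e i j)%:R).
  by apply: eq_bigr => c _; exact: exchange_big.
rewrite exchange_big /=; apply: eq_bigr => i _.
transitivity (\sum_c \sum_j \sum_d del c i * del d j * (e i j)%:R).
  by apply: eq_bigr => c _; exact: exchange_big.
rewrite exchange_big /=; apply: eq_bigr => j _.
transitivity ((\sum_c del c i) * (\sum_d del d j) * ((e i j)%:R : R));
  last by rewrite !sum_delta !mul1r.
rewrite big_distrl big_distrl /=; apply: eq_bigr => c _.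
by rewrite big_distrr big_distrl /=.
Qed.

End G.

Lemma sumA2 (R : realType) n (e : rel 'I_n) : irreflexive e -> symmetric e ->
  \sum_i \sum_j ((e i j)%:R : R) = 2 * (num_edges e)%:R.
Proof.
move=> irr sym.
have E1 : ((num_edges e)%:R : R) = \sum_(i : 'I_n) \sum_(j : 'I_n) (((i < j)%N && e i j)%:R : R).
  rewrite /num_edges -sum1_card natr_sum big_mkcond /=.
  rewrite pair_big /=; apply: eq_bigr => [[i j]] _ /=.
  by rewrite inE /=; case: (_ && _).
have E2 : ((num_edges e)%:R : R) = \sum_(i : 'I_n) \sum_(j : 'I_n) (((j < i)%N && e i j)%:R : R).
  rewrite E1 exchange_big /=; apply: eq_bigr => i _; apply: eq_bigr => j _.
  by rewrite sym.
rewrite mulr2n mulrDl mul1r {1}E1 E2 -big_split /=; apply: eq_bigr => i _.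
rewrite -big_split /=; apply: eq_bigr => j _.
case: (ltngtP i j) => [ij|ji|/val_inj ->] /=; rewrite ?addr0 ?add0r //.
by rewrite irr.
Qed.

Theorem theorem2p8 (R : realType) (n : nat) (e : rel 'I_n) (mu : R) :
  simple_graph e ->
  (0 < num_edges e)%N ->
  is_smallest_eigenvalue (adj_mx R e) mu ->
  mu <= - (num_edges e)%:R /
          (('C(chromatic_number e, 2))%:R * theta R e).
Proof.
move=> [irr sym] Epos [_ minmu].
have [f Hf] : exists f : 'I_n -> 'I_(chromatic_number e),
    forall x y, e x y -> f x != f y.
  have hcol : has (colorable e) (iota 0 n.+1).
    apply/hasP; exists n; first by rewrite mem_iota add0n ltnSn.
    apply/existsP; exists [ffun x => x]; apply/forallP => x; apply/forallP => y.
    apply/implyP => exy; rewrite !ffunE; apply: contraTneq exy => ->.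
    by rewrite irr.
  have := nth_find 0 hcol.
  rewrite nth_iota ?add0n; last by move: hcol; rewrite has_find size_iota.
  case/existsP => f /forallP Hf; exists (fun x => f x) => x y exy.
  by move: (Hf x) => /forallP /(_ y) /implyP; apply.
set k := chromatic_number e in f Hf *.
set E := num_edges e in Epos *.
set th := theta R e.
set B := ('C(k, 2))%:R : R.
have [i0 _] : exists i0 : 'I_n, true.
  move: Epos; rewrite /E /num_edges card_gt0 => /set0Pn [[i0 j0] _].
  by exists i0.
have mu0 : mu <= 0.
  have := @rayleigh R n (adj_mx R e) mu (\row_j ((j == i0)%:R)) (@symA R n e sym) minmu.
  rewrite quad_form norm_form.
  rewrite [X in _ <= X]big1 => [|i _]; last first.
    rewrite big1 // => j _; rewrite /adj_mx !mxE.
    case: (i =P i0) => [->|_]; case: (j =P i0) => [->|_];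
      rewrite ?irr /=; try (by rewrite ?mulr0n ?mul0r ?mulr0); rewrite -!natrM /= ?muln0 ?mul0n //.
  rewrite (bigD1 i0) //= big1 => [|i /negbTE]; last by rewrite mxE => ->; rewrite expr0n.
  by rewrite mxE eqxx expr1n addr0 mulr1.
have Fp := @pair_ineq R n e sym k f Hf mu minmu.
have hth c d : c != d -> ac R n k f c + ac R n k f d <= 2 * th.
  move=> cd; have h1 := @ac_sum_le R n k f c d cd.
  have h2 := @ac_le_alpha R n e k f Hf c; have h3 := @ac_le_alpha R n e k f Hf d.
  suff : (ac R n k f c + ac R n k f d) / 2 <= th by lra.
  rewrite /th /theta le_min; apply/andP; split; lra.
have step c d : c != d -> mu * (2 * th) <= - (W R n e k f c d + W R n e k f d c).
  move=> cd; apply: (le_trans _ (Fp c d cd)).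
  by move: (ler_wnM2l mu0 (hth c d cd)).
have Wcc c : W R n e k f c c = 0.
  by rewrite /W big1 // => i _; rewrite big1 // => j _; exact: delcc.
have S : \sum_(c : 'I_k) \sum_(d in predC1 c) (mu * (2 * th)) <=
         \sum_(c : 'I_k) \sum_(d in predC1 c) - (W R n e k f c d + W R n e k f d c).
  apply: ler_sum => c _; apply: ler_sum => d; rewrite inE => dc.
  by apply: step; rewrite eq_sym.
have L : \sum_(c : 'I_k) \sum_(d in predC1 c) (mu * (2 * th)) =
    mu * (2 * th) * (k * k.-1)%:R.
  under eq_bigr => c _ do rewrite sumr_const cardC1 card_ord.
  by rewrite sumr_const card_ord -mulrnA mulr_natr mulnC.
have Rr : \sum_(c : 'I_k) \sum_(d in predC1 c) - (W R n e k f c d + W R n e k f d c)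
    = - (2 * (2 * (E%:R : R))).
  transitivity (\sum_(c : 'I_k) - \sum_(d : 'I_k) (W R n e k f c d + W R n e k f d c)).
    apply: eq_bigr => c _.
    rewrite [in RHS](bigD1 c) //= Wcc addr0 add0r -sumrN.
    by apply: eq_bigl => d; rewrite inE.
  rewrite sumrN; under eq_bigr => c _ do rewrite big_split.
  rewrite big_split /= (@sumW R n e k f).
  rewrite [X in _ + X]exchange_big /= (@sumW R n e k f).
  rewrite (@sumA2 R n e irr sym) -/E; lra.
have hC : ('C(k, 2) * 2 = k * k.-1)%N.
  by rewrite -[X in (_ * X)%N]/(2`!) bin_ffact ffactnS ffactn1.
have key : mu * th * B <= - (E%:R).
  move: S; rewrite L Rr -hC natrM -/B => S; nra.
have th0 : 0 <= th.
  rewrite /th /theta le_min; apply/andP; split.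
    by apply: divr_ge0; rewrite ler0n.
  by rewrite ler0n.
have B0 : 0 <= B by rewrite ler0n.
have E0 : (0 : R) < E%:R by rewrite ltr0n.
have pos : 0 < B * th.
  rewrite lt_def mulr_ge0 // andbT; apply/eqP => h0.
  move: key; rewrite -mulrA [th * B]mulrC h0 mulr0; lra.
rewrite ler_pdivlMr //.
by move: key; rewrite -mulrA [th * B]mulrC.
Qed.
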